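(* Let $\tilde L$ be a minimum-size counterexample. Let $L'\subseteq\tilde L$ be a subset which, with the order inherited from $\tilde L$, is a lattice (with least element $0_{L'}$ and greatest element $1_{L'}$), and suppose that at least one of the following holds: (i) $3<|L'|<8$; (ii) $2<|L'|<|\tilde L|-2$ and $d\le 1_{L'}$ for some dual atom $d$ of $\tilde L$. Then there exist $x\in L'\setminus\{0_{L'},1_{L'}\}$ and $y\in\tilde L\setminus L'$ such that, in $\tilde L$, $x$ upper covers $y$ or $x$ lower covers $y$.
   Context: For a poset $P$, $x$ upper covers $y$ (and $y$ lower covers $x$) if $y<x$ with nothing strictly between. Join-irreducible: upper covers exactly one element. A dual atom of a finite lattice is an element lower covered by... i.e. an element that the greatest element upper covers. For $x\in P$, ${\uparrow}x=\{y: x\le y\}$. A counterexample is a finite lattice $L$ with $|L|>1$ in which every join-irreducible $j$ satisfies $|{\uparrow}j|>|L|/2$; a minimum-size counterexample is a counterexample $\tilde L$ such that no counterexample has fewer elements. *)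

(* Defs.v *)
From mathcomp Require Import all_boot all_order.
Set Implicit Arguments. Unset Strict Implicit. Unset Printing Implicit Defensive.
Import Order.Theory.
Local Open Scope order_scope.

Definition ucovers {d} {T : finPOrderType d} (x y : T) : bool :=
  (y < x) && [forall z : T, ~~ ((y < z) && (z < x))].

Definition join_irr {d} {T : finPOrderType d} (j : T) : bool :=
  #|[set y : T | ucovers j y]| == 1%N.

Definition upset {d} {T : finPOrderType d} (x : T) : {set T} := [set y : T | x <= y].

Definition dual_atom {d} {T : finTBLatticeType d} (x : T) : bool := ucovers \top x.

Definition counterexample {d} (L : finTBLatticeType d) : Prop :=
  (1 < #|L|)%N /\ forall j : L, join_irr j -> (#|L| < 2 * #|upset j|)%N.

Definition min_counterexample {d} (L : finTBLatticeType d) : Prop :=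
  counterexample L /\
  forall (d' : Order.disp_t) (M : finTBLatticeType d'),
    counterexample M -> (#|L| <= #|M|)%N.

Definition induced_lattice {d} {T : finPOrderType d} (S : {set T}) : Prop :=
  forall a b : T, a \in S -> b \in S ->
    (exists2 j, j \in S & forall z, z \in S -> ((a <= z) && (b <= z)) = (j <= z)) /\
    (exists2 m, m \in S & forall z, z \in S -> ((z <= a) && (z <= b)) = (z <= m)).

(* Main.v *)
From HB Require Import structures.
Require Import Defs.
From mathcomp Require Import all_boot all_order.
From mathcomp Require Import zify.
Set Implicit Arguments. Unset Strict Implicit. Unset Printing Implicit Defensive.
Import Order.Theory.
Local Open Scope order_scope.

Definition ucov_in {d} {L : finTBLatticeType d} (A : {set L}) (x y : L) :=
  (y < x) && [forall z, (z \in A) ==> ~~ ((y < z) && (z < x))].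
Definition jirr_in {d} {L : finTBLatticeType d} (A : {set L}) (x : L) :=
  #|[set y in A | ucov_in A x y]| == 1%N.
Definition up_in {d} {L : finTBLatticeType d} (A : {set L}) (x : L) :=
  [set y in A | x <= y].

Section Sub.
Variables (d : Order.disp_t) (L : finTBLatticeType d) (S : {set L}) (bot top : L).
Hypotheses (hS : induced_lattice S) (hbot : bot \in S) (htop : top \in S)
  (hb : forall z, z \in S -> bot <= z) (ht : forall z, z \in S -> z <= top).

Record subT := MkT { tval : L; tvalP : tval \in S }.
HB.instance Definition _ := [isSub for tval].
HB.instance Definition _ := [Finite of subT by <:].

Definition tle (x y : subT) := tval x <= tval y.
Definition tlt (x y : subT) := tval x < tval y.
Lemma tlt_def x y : tlt x y = (y != x) && tle x y.
Proof. by rewrite /tlt /tle lt_def. Qed.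
Lemma tle_refl : reflexive tle. Proof. by move=> x; rewrite /tle. Qed.
Lemma tle_anti : antisymmetric tle.
Proof. by move=> x y /le_anti H; apply: val_inj. Qed.
Lemma tle_trans : transitive tle.
Proof. by move=> x y z; apply: le_trans. Qed.
HB.instance Definition _ := Order.isPOrder.Build d subT tlt_def tle_refl tle_anti tle_trans.

Definition tjoin (x y : subT) : subT :=
  odflt x [pick j : subT | [forall z : subT, ((x <= z) && (y <= z)) == (j <= z)]].
Definition tmeet (x y : subT) : subT :=
  odflt x [pick j : subT | [forall z : subT, ((z <= x) && (z <= y)) == (z <= j)]].

Lemma tjoinP x y z : (tjoin x y <= z) = (x <= z) && (y <= z).
Proof.
rewrite /tjoin; case: pickP => [j /forallP /(_ z) /eqP -> //|H].
exfalso; have [[j jS Hj] _] := hS (tvalP x) (tvalP y).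
move/negbT: (H (MkT jS)); apply/negP/negPn/forallP => w.
by apply/eqP; apply: Hj; apply: tvalP.
Qed.
Lemma tmeetP x y z : (z <= tmeet x y) = (z <= x) && (z <= y).
Proof.
rewrite /tmeet; case: pickP => [j /forallP /(_ z) /eqP -> //|H].
exfalso; have [_ [j jS Hj]] := hS (tvalP x) (tvalP y).
move/negbT: (H (MkT jS)); apply/negP/negPn/forallP => w.
by apply/eqP; apply: Hj; apply: tvalP.
Qed.
Lemma tmeetP' x y z : (x <= tmeet y z) = (x <= y) && (x <= z). Proof. exact: tmeetP. Qed.
HB.instance Definition _ := Order.POrder_MeetJoin_isLattice.Build d subT tmeetP' tjoinP.
Lemma tle0x x : MkT hbot <= x. Proof. exact: hb (tvalP x). Qed.
Lemma tlex1 x : x <= MkT htop. Proof. exact: ht (tvalP x). Qed.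
HB.instance Definition _ := Order.hasBottom.Build d subT tle0x.
HB.instance Definition _ := Order.hasTop.Build d subT tlex1.
Definition subL : finTBLatticeType d := subT.

Lemma cardT (P : pred L) : #|[set y : subT | P (tval y)]| = #|[set y in S | P y]|.
Proof.
rewrite -(card_imset _ val_inj); apply: eq_card => y.
rewrite [in RHS]inE; apply/imsetP/andP => [[z]|[yS Py]].
  by rewrite inE => Pz ->; split => //; apply: tvalP.
by exists (MkT yS); rewrite ?inE.
Qed.

Lemma card_subL : #|subL| = #|S|.
Proof.
have := cardT predT; rewrite /=.
have -> : [set y : subT | true] = setT by apply/setP=> y; rewrite !inE.
rewrite cardsT => ->; apply: eq_card => y; rewrite !inE andbT //.
Qed.

Lemma ucovers_sub (x y : subL) : ucovers x y = ucov_in S (tval x) (tval y).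
Proof.
rewrite /ucovers /ucov_in; congr (_ && _).
apply/forallP/forallP => H z.
  apply/implyP => zS; exact: (H (MkT zS)).
by have := H (tval z); rewrite tvalP.
Qed.

Lemma cex_sub : counterexample subL <->
  (1 < #|S|)%N /\ forall j, j \in S -> jirr_in S j -> (#|S| < 2 * #|up_in S j|)%N.
Proof.
rewrite /counterexample card_subL.
have E1 (x : subL) : join_irr x = jirr_in S (tval x).
  rewrite /join_irr /jirr_in.
  have -> : [set y : subL | ucovers x y] = [set y : subT | ucov_in S (tval x) (tval y)].
    by apply/setP => y; rewrite !inE ucovers_sub.
  by rewrite (cardT (ucov_in S (tval x))).
have E2 (x : subL) : #|upset x| = #|up_in S (tval x)|.
  by rewrite /upset /up_in -(cardT (fun y => tval x <= y)).
split=> [[h1 h2]|[h1 h2]]; split => // j.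
  move=> jS; have := h2 (MkT jS); rewrite E1 E2; exact.
by rewrite E1 E2; apply: h2; apply: tvalP.
Qed.
End Sub.


Section Gen.
Variables (d : Order.disp_t) (L : finTBLatticeType d).
Implicit Types (A : {set L}) (x y z w : L).

Lemma ucov_setT x y : ucov_in [set: L] x y = ucovers x y.
Proof.
rewrite /ucov_in /ucovers; congr (_ && _); apply/forallP/forallP => H z.
  by have := H z; rewrite inE.
by rewrite inE /=; exact: H.
Qed.

Lemma lcover_ex A x y : x \in A -> y \in A -> y < x ->
  exists2 w, w \in A & ucov_in A x w && (y <= w).
Proof.
move=> xA yA yx.
pose P w := [&& w \in A, y <= w & w < x].
have Py : P y by rewrite /P yA lexx yx.
case: (arg_maxnP (fun w => #|[set t | t <= w]|) Py) => w /and3P [wA yw wx] Hmax.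
exists w => //; rewrite yw andbT /ucov_in wx /=.
apply/forallP => z; apply/implyP => zA; apply/negP => /andP [wz zx].
have Pz : P z by rewrite /P zA zx (le_trans yw (ltW wz)).
have := Hmax z Pz; apply/negP; rewrite -ltnNge; apply: proper_card.
apply/properP; split.
  by apply/subsetP => t; rewrite !inE => /le_trans; apply; apply: ltW.
by exists z; rewrite !inE ?lexx //= ?(lt_geF wz).
Qed.

Lemma ucover_ex A x y : x \in A -> y \in A -> x < y ->
  exists2 w, w \in A & ucov_in A w x && (w <= y).
Proof.
move=> xA yA xy.
pose P w := [&& w \in A, w <= y & x < w].
have Py : P y by rewrite /P yA lexx xy.
case: (arg_maxnP (fun w => #|[set t | w <= t]|) Py) => w /and3P [wA wy xw] Hmax.
exists w => //; rewrite wy andbT /ucov_in xw /=.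
apply/forallP => z; apply/implyP => zA; apply/negP => /andP [xz zw].
have Pz : P z by rewrite /P zA xz (le_trans (ltW zw) wy).
have := Hmax z Pz; apply/negP; rewrite -ltnNge; apply: proper_card.
apply/properP; split.
  by apply/subsetP => t; rewrite !inE; apply: le_trans; apply: ltW.
by exists z; rewrite !inE ?lexx //= ?(lt_geF zw).
Qed.

Lemma lcover_exL x y : y < x -> exists2 w, ucovers x w & y <= w.
Proof.
move=> yx; have [w _ /andP[]] := @lcover_ex setT x y (in_setT _) (in_setT _) yx.
by rewrite ucov_setT => ??; exists w.
Qed.

Lemma ucover_exL x y : x < y -> exists2 w, ucovers w x & w <= y.
Proof.
move=> xy; have [w _ /andP[]] := @ucover_ex setT x y (in_setT _) (in_setT _) xy.
by rewrite ucov_setT => ??; exists w.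
Qed.

Lemma not_jirr_bot A b : (forall z, z \in A -> b <= z) -> ~~ jirr_in A b.
Proof.
move=> hb; rewrite /jirr_in; apply/negP => /cards1P [c Hc].
have : c \in [set y in A | ucov_in A b y] by rewrite Hc set11.
rewrite inE => /andP [cA /andP [cb _]].
by have := lt_le_trans cb (hb c cA); rewrite ltxx.
Qed.

End Gen.


Lemma ar1 a i b n : (a + b = n + 2 -> i + 2 = b -> 0 < i -> a < n)%N.
Proof. lia. Qed.
Lemma ar2 a b n u : (a + b = n + 2 -> n + 2 < b + 2*u -> a < 2*u)%N.
Proof. lia. Qed.
Lemma ar3 a b n u v : (a + b = n + 2 -> n + 2 < b + 2*u -> u < v -> a < 2*v)%N.
Proof. lia. Qed.

Section Block.
Variables (d : Order.disp_t) (L : finTBLatticeType d).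
Variables (B : {set L}) (b0 b1 : L).
Hypotheses (b0B : b0 \in B) (b1B : b1 \in B)
  (hb : forall z, z \in B -> b0 <= z) (ht : forall z, z \in B -> z <= b1)
  (iso : forall x, x \in B -> x != b0 -> x != b1 -> forall y, y \notin B ->
     ~~ ucovers x y && ~~ ucovers y x).

Definition inI x := [&& x \in B, x != b0 & x != b1].

Lemma F1 n : forall x z : L, (#|[set t | (t < x)%O]| <= n)%N -> inI x -> z \notin B -> z <= x -> z <= b0.
Proof.
elim: n => [|n IH] x z Hn /and3P [xB x0 x1] zB zx.
  have zx' : z < x by rewrite lt_neqAle zx andbT; apply: contraNneq zB => ->.
  by move: Hn; rewrite leqn0 cards_eq0 => /eqP/setP/(_ z); rewrite !inE zx'.
have zx' : z < x by rewrite lt_neqAle zx andbT; apply: contraNneq zB => ->.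
have [w xw zw] := lcover_exL zx'.
have wB : w \in B.
  apply: contraT => wB; by have /andP [/negP] := iso xB x0 x1 wB.
have wx : w < x by case/andP: xw.
case: (eqVneq w b0) => [<- //|w0].
have w1 : w != b1.
  by apply/eqP => E; move: wx; rewrite E => /lt_le_trans /(_ (ht xB)); rewrite ltxx.
apply: (IH w) => //; last by rewrite /inI wB w0 w1.
rewrite -ltnS; apply: leq_trans Hn; apply: proper_card; apply/properP; split.
  by apply/subsetP => t; rewrite !inE => tw; apply: lt_trans tw wx.
by exists w; rewrite !inE ?ltxx.
Qed.

Lemma F2 n : forall x z : L, (#|[set t | (x < t)%O]| <= n)%N -> inI x -> z \notin B -> x <= z -> b1 <= z.
Proof.
elim: n => [|n IH] x z Hn /and3P [xB x0 x1] zB zx.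
  have zx' : x < z by rewrite lt_neqAle zx andbT; apply: contraNneq zB => <-.
  by move: Hn; rewrite leqn0 cards_eq0 => /eqP/setP/(_ z); rewrite !inE zx'.
have zx' : x < z by rewrite lt_neqAle zx andbT; apply: contraNneq zB => <-.
have [w xw zw] := ucover_exL zx'.
have wB : w \in B.
  apply: contraT => wB; by have /andP [_ /negP] := iso xB x0 x1 wB.
have wx : x < w by case/andP: xw.
case: (eqVneq w b1) => [<- //|w1].
have w0 : w != b0.
  by apply/eqP => E; move: wx; rewrite E => /(le_lt_trans (hb xB)); rewrite ltxx.
apply: (IH w) => //; last by rewrite /inI wB w0 w1.
rewrite -ltnS; apply: leq_trans Hn; apply: proper_card; apply/properP; split.
  by apply/subsetP => t; rewrite !inE => tw; apply: lt_trans wx tw.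
by exists w; rewrite !inE ?ltxx.
Qed.

Lemma F1' x z : inI x -> z \notin B -> z <= x -> z <= b0.
Proof. exact: (@F1 _ x z (leqnn _)). Qed.
Lemma F2' x z : inI x -> z \notin B -> x <= z -> b1 <= z.
Proof. exact: (@F2 _ x z (leqnn _)). Qed.

Lemma F3 x : inI x -> join_irr x = jirr_in B x.
Proof.
move=> Ix; have /and3P [xB x0 x1] := Ix.
rewrite /join_irr /jirr_in; congr (_ == _); apply: eq_card => y; rewrite !inE.
apply/idP/andP => [Hc|[yB /andP [yx Hf]]].
  have yB : y \in B by apply: contraT => yB; have /andP [/negP] := iso xB x0 x1 yB.
  split => //; move: Hc; rewrite /ucovers /ucov_in => /andP [-> /forallP H] /=.
  apply/forallP => z; apply/implyP => _; exact: H.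
rewrite /ucovers yx /=; apply/forallP => z; apply/negP => /andP [yz zx].
case: (boolP (z \in B)) => zB.
  by have := forallP Hf z; rewrite zB /= yz zx.
have := F1' Ix zB (ltW zx) => /(lt_le_trans yz) /lt_le_trans /(_ (hb yB)).
by rewrite ltxx.
Qed.

Lemma F4 x : inI x -> (#|upset x| + 1 = #|up_in B x| + #|upset b1|)%N.
Proof.
move=> Ix; have /and3P [xB x0 x1] := Ix.
have E : upset x = up_in B x :|: (upset b1 :\ b1).
  apply/setP => y; rewrite /upset /up_in !inE; apply/idP/idP => [xy|].
    case: (boolP (y \in B)) => yB; first by rewrite xy.
    by rewrite /= (F2' Ix yB xy) andbT; apply: contraNneq yB => ->.
  case/orP => [/andP [_ //]|/andP [yb1 b1y]]; exact: le_trans (ht xB) b1y.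
have D : up_in B x :&: (upset b1 :\ b1) = set0.
  apply/setP => y; rewrite /upset /up_in !inE; apply/negP => /andP [/andP [yB _] /andP [yb1 b1y]].
  by move: yb1; rewrite eq_le b1y ht.
have := cardsUI (up_in B x) (upset b1 :\ b1); rewrite D cards0 addn0 -E => ->.
have h : #|upset b1| = (#|upset b1 :\ b1|).+1.
  by rewrite (cardsD1 b1 (upset b1)) [b1 \in upset b1]inE lexx.
rewrite h.
by rewrite addn1 addnS.
Qed.
Lemma low a y : ~~ inI a -> inI y -> a <= y -> a <= b0.
Proof.
move=> Ka Iy ay; have /and3P [yB y0 y1] := Iy.
case: (boolP (a \in B)) => aB; last exact: F1' Iy aB ay.
case: (eqVneq a b0) => [-> //|a0].
have a1 : a == b1 by move: Ka; rewrite /inI aB a0 /= negbK.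
move/eqP: a1 => a1; subst a.
by move: y1; rewrite eq_le ht //= ay.
Qed.

Lemma high a y : ~~ inI a -> inI y -> y <= a -> b1 <= a.
Proof.
move=> Ka Iy ay; have /and3P [yB y0 y1] := Iy.
case: (boolP (a \in B)) => aB; last exact: F2' Iy aB ay.
case: (eqVneq a b1) => [-> //|a1].
have a0 : a == b0 by move: Ka; rewrite /inI aB a1 /= andbT negbK.
move/eqP: a0 => a0; subst a.
by move: y0; rewrite eq_le hb //= andbT ay.
Qed.

Lemma key (Hmin : min_counterexample L) x0 (Ix0 : inI x0)
  (HU : (#|L| + 2 < #|B| + 2 * #|upset b1|)%N) : False.
Proof.
have /and3P [x0B x00 x01] := Ix0.
have b0x : b0 < x0 by rewrite lt_neqAle eq_sym x00 hb.
have xb1 : x0 < b1 by rewrite lt_neqAle x01 ht.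
have b01 : b0 != b1 by rewrite (lt_eqF (lt_trans b0x xb1)).
have nI0 : ~~ inI b0 by rewrite /inI eqxx andbF.
have nI1 : ~~ inI b1 by rewrite /inI eqxx !andbF.
pose Iset := [set y | inI y].
pose K := ~: Iset.
have inK y : (y \in K) = ~~ inI y by rewrite !inE.
have cardI : (#|Iset| + 2 = #|B|)%N.
  have -> : Iset = (B :\ b0) :\ b1.
    by apply/setP => y; rewrite !inE /inI andbC [(_ != b0) && _]andbC andbA.
  rewrite (cardsD1 b0 B) b0B (cardsD1 b1 (B :\ b0)) !inE eq_sym b01 b1B /=.
  by rewrite addn2 add1n.
have cardK : (#|K| + #|B| = #|L| + 2)%N.
  by rewrite -cardI addnA [(#|K| + _)%N]addnC cardsC.
have ltK : (#|K| < #|L|)%N.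
  have : (0 < #|Iset|)%N by apply/card_gt0P; exists x0; rewrite inE.
  by move/ar1: cardK; apply.
have nIbot : ~~ inI \bot.
  apply/negP => /and3P [bB b0n _]; move: b0n; rewrite eq_le le0x hb //.
have nItop : ~~ inI \top.
  apply/negP => /and3P [bB _ b1n]; move: b1n; rewrite eq_le lex1 ht //.
have closJ a b : ~~ inI a -> ~~ inI b -> ~~ inI (a `|` b).
  move=> Ka Kb; apply/negP => Iab.
  have ha := low Ka Iab (leUl a b); have hb' := low Kb Iab (leUr b a).
  have : a `|` b <= b0 by rewrite leUx ha hb'.
  have /and3P [abB ab0 _] := Iab.
  by move: ab0; rewrite eq_le hb // andbT => /negbTE ->.
have closM a b : ~~ inI a -> ~~ inI b -> ~~ inI (a `&` b).
  move=> Ka Kb; apply/negP => Iab.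
  have ha := high Ka Iab (leIl a b); have hb' := high Kb Iab (leIr b a).
  have : b1 <= a `&` b by rewrite lexI ha hb'.
  have /and3P [abB _ ab1] := Iab.
  by move: ab1; rewrite eq_le ht //= => /negbTE ->.
have KL : induced_lattice K.
  move=> a b; rewrite !inK => Ka Kb; split.
    by exists (a `|` b); [rewrite inK; exact: closJ | move=> z _; rewrite leUx].
  by exists (a `&` b); [rewrite inK; exact: closM | move=> z _; rewrite lexI].
have Kbot : \bot \in K by rewrite inK.
have Ktop : \top \in K by rewrite inK.
have cexK : counterexample (subL KL Kbot Ktop (fun z _ => le0x z) (fun z _ => lex1 z)).
  apply/cex_sub; split.
    by apply/card_gt1P; exists b0, b1; rewrite !inK nI0 nI1 b01.
  have upK1 y : b1 <= y -> ~~ inI y.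
    move=> b1y; apply/negP => Iy; have /and3P [yB _ y1] := Iy.
    by move: y1; rewrite eq_le b1y ht.
  move=> j; rewrite inK => Kj jj.
  case: (eqVneq j b1) => [->|jb1].
    have -> : #|up_in K b1| = #|upset b1|.
      by apply: eq_card => y; rewrite /up_in /upset !inE -/(inI y); case: (boolP (b1 <= y)) => b1y; [by rewrite (upK1 _ b1y) | by rewrite andbF].
    exact: ar2 cardK HU.
  case: (boolP (j <= b0)) => jb0.
    have : (#|upset b1| < #|up_in K j|)%N.
      apply: proper_card; apply/properP; split.
        apply/subsetP => y; rewrite /upset /up_in !inE => b1y.
        by rewrite -/(inI y) (upK1 _ b1y) /= (le_trans jb0 (le_trans (ltW (lt_trans b0x xb1)) b1y)).
      exists b0; first by rewrite /up_in !inE -/(inI b0) nI0.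
      rewrite /upset inE; apply/negP => b10; move: b01; rewrite eq_le b10 hb //.
    exact: ar3 cardK HU.
  have upj : #|up_in K j| = #|upset j|.
    apply: eq_card => y; rewrite /up_in /upset !inE -/(inI y).
    case: (boolP (j <= y)) => jy; last by rewrite andbF.
rewrite andbT; apply/negP => Iy.
    by move: jb0; rewrite (low Kj Iy jy).
  have jB : j \notin B.
    apply/negP => jB; move: Kj; rewrite /inI jB jb1 andbT /= negbK => /eqP ej.
    by move: jb0; rewrite ej lexx.
  have covK w : ucovers j w -> ~~ inI w.
    move=> jw; apply/negP => Iw; have /and3P [wB w0 w1] := Iw.
    by have /andP [_ /negP] := iso wB w0 w1 jB.
  have JI : join_irr j.
    move: jj; rewrite /join_irr /jirr_in => /eqP <-; apply/eqP; apply: eq_card => y.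
    rewrite !inE -/(inI y); apply/idP/andP => [jy|[Ky /andP [yj Hf]]].
      split; first exact: covK.
      move: jy; rewrite /ucovers /ucov_in => /andP [-> /forallP H] /=.
      by apply/forallP => z; apply/implyP => _; exact: H.
    have [w jw yw] := lcover_exL yj.
    case: (eqVneq y w) => [-> //|yw'].
    have Kw := covK _ jw; have /andP [wj _] := jw.
    have := forallP Hf w; rewrite inK Kw /= (lt_neqAle y w) yw' yw wj //.
  have := (proj2 (proj1 Hmin)) j JI.
  move: (subset_leq_card (subsetT K)); rewrite cardsT.
  by rewrite upj => H1 H2; apply: leq_ltn_trans H1 H2.
have := (proj2 Hmin) _ _ cexK; rewrite card_subL.
by rewrite leqNgt ltK.
Qed.
End Block.


Section Small.
Variables (d : Order.disp_t) (L : finTBLatticeType d).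
Implicit Types (x y z c p q : L).

Lemma cov_lt x y : ucovers x y -> y < x.
Proof. by case/andP. Qed.

Lemma cov_btw x y z : ucovers x y -> y < z -> z < x -> False.
Proof. by case/andP => _ /forallP /(_ z) /negP H yz zx; apply: H; rewrite yz zx. Qed.

Lemma coatom_le c c' : ucovers \top c -> ucovers \top c' -> c <= c' -> c = c'.
Proof.
move=> hc hc' cc'; case: (eqVneq c c') => // ne.
exfalso; apply: (cov_btw hc) (cov_lt hc'); by rewrite lt_neqAle ne cc'.
Qed.

Lemma join_two c p q : ucovers c p -> ucovers c q -> p != q -> p `|` q = c.
Proof.
move=> hp hq pq.
have pc := cov_lt hp; have qc := cov_lt hq.
have le1 : p `|` q <= c by rewrite leUx !ltW.
move: le1; rewrite le_eqVlt => /orP [/eqP //|lt1]; exfalso.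
move: (leUl p q); rewrite le_eqVlt => /orP [/eqP E|lt2].
  have qp : q < p by rewrite lt_neqAle eq_sym pq E leUr.
  exact: (cov_btw hq qp pc).
exact: (cov_btw hp lt2 lt1).
Qed.

Lemma cov_ne_bot c p q : ucovers c p -> ucovers c q -> p != q -> p != \bot.
Proof.
move=> hp hq pq; apply/eqP => E; subst p.
have bq : \bot < q by rewrite lt_neqAle pq le0x.
exact: (cov_btw hp bq (cov_lt hq)).
Qed.

Lemma two_covers x : ~~ join_irr x -> \bot < x ->
  exists p, exists q, [/\ ucovers x p, ucovers x q & p != q].
Proof.
move=> nj bx; have [w xw _] := lcover_exL bx.
have : (1 < #|[set y | ucovers x y]|)%N.
  have : (0 < #|[set y | ucovers x y]|)%N by apply/card_gt0P; exists w; rewrite inE.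
  move: nj; rewrite /join_irr; case: #|_| => [|[|n]] //.
case/card_gt1P => p [q [Hp Hq pq]]; exists p, q; rewrite !inE in Hp Hq; by split.
Qed.

Lemma all7 (P : pred L) a1 a2 a3 a4 a5 a6 a7 :
  (forall z, z \in [:: a1; a2; a3; a4; a5; a6; a7]) ->
  P a1 -> P a2 -> P a3 -> P a4 -> P a5 -> P a6 -> P a7 -> forall z, P z.
Proof.
move=> H ? ? ? ? ? ? ? z; move: (H z).
do 6 (case/predU1P => [-> //|]).
by rewrite orbF => /eqP ->.
Qed.

Lemma small : counterexample L -> (8 <= #|L|)%N.
Proof.
case=> N1 cex; rewrite leqNgt; apply/negP => N7.
have bt : (\bot : L) < \top.
  rewrite lt_neqAle le0x andbT; apply/negP => /eqP E.
  move/card_gt1P: N1 => [a [b [_ _ ab]]]; move: ab.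
  have ea : a = \bot by apply/eqP; rewrite eq_le le0x E lex1.
  have eb : b = \bot by apply/eqP; rewrite eq_le le0x E lex1.
  by rewrite ea eb eqxx.
have upt : upset (\top : L) = [set \top].
  by apply/setP => z; rewrite !inE eq_le lex1.
have ntop : ~~ join_irr (\top : L).
  apply/negP => /cex; rewrite upt cards1 => H; move: N1; rewrite leqNgt.
  by move: H; case: #|L| => [|[|]].
have [c1 [c2 [h1 h2 c12]]] := two_covers ntop bt.
have c1b := cov_ne_bot h1 h2 c12.
have c21 : c2 != c1 by rewrite eq_sym.
have c2b := cov_ne_bot h2 h1 c21.
have c1t := cov_lt h1; have c2t := cov_lt h2.
have coat c : ucovers \top c -> ~~ join_irr c.
  move=> hc; apply/negP => /cex H.
  have bc : \bot < c.
    rewrite lt_neqAle le0x andbT; apply/eqP => E.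
    case: (eqVneq c c1) => [Ec|ne]; first by move: c1b; rewrite -Ec -E eqxx.
    suff : c < c1 by move/(cov_btw hc) => /(_ c1t).
    by rewrite -E lt_neqAle le0x andbT eq_sym; rewrite -E in ne.
  have U2 : (#|upset c| <= 2)%N.
    apply: leq_trans (card_size [:: c; \top]); apply: subset_leq_card.
    apply/subsetP => z; rewrite inE !inE => cz.
    case: (eqVneq z \top) => [_|zt]; first by rewrite orbT.
    case: (eqVneq z c) => [_|czn]; first by [].
    exfalso; apply: (cov_btw hc (y:=c) (z:=z)); first by rewrite lt_neqAle eq_sym czn cz.
    by rewrite lt_neqAle zt lex1.
  have : (4 <= #|L|)%N.
    have U : uniq [:: \bot; \top; c1; c2].
      rewrite /= !inE !negb_or (lt_eqF bt) eq_sym c1b eq_sym c2b c12.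
      by rewrite eq_sym (lt_eqF c1t) eq_sym (lt_eqF c2t).
    by move/card_uniqP: U => /= <-; apply: max_card.
  move=> H4; have := leq_ltn_trans H4 H; move: U2; rewrite leqNgt.
  by case: #|upset c| => [|[|[|]]].
have bc1 : \bot < c1 by rewrite lt_neqAle le0x andbT eq_sym.
have bc2 : \bot < c2 by rewrite lt_neqAle le0x andbT eq_sym.
have [p1 [q1 [hp1 hq1 pq1 nq1]]] : exists p, exists q,
    [/\ ucovers c1 p, ucovers c1 q, p != q & ~~ (q <= c2)].
  have [p [q [hp hq pq]]] := two_covers (coat _ h1) bc1.
  case: (boolP (q <= c2)) => qc; last by exists p, q.
  case: (boolP (p <= c2)) => pc; last by exists q, p; split => //; rewrite eq_sym.
  exfalso; move: c12; rewrite -(join_two hp hq pq).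
  have : p `|` q <= c2 by rewrite leUx pc qc.
  rewrite (join_two hp hq pq) => /(coatom_le h1 h2) ->; by rewrite eqxx.
have [p2 [q2 [hp2 hq2 pq2 nq2]]] : exists p, exists q,
    [/\ ucovers c2 p, ucovers c2 q, p != q & ~~ (q <= c1)].
  have [p [q [hp hq pq]]] := two_covers (coat _ h2) bc2.
  case: (boolP (q <= c1)) => qc; last by exists p, q.
  case: (boolP (p <= c1)) => pc; last by exists q, p; split => //; rewrite eq_sym.
  exfalso; move: c21; rewrite -(join_two hp hq pq).
  have : p `|` q <= c1 by rewrite leUx pc qc.
  rewrite (join_two hp hq pq) => /(coatom_le h2 h1) ->; by rewrite eqxx.
have p1c := cov_lt hp1; have q1c := cov_lt hq1; have q2c := cov_lt hq2.
have p1b := cov_ne_bot hp1 hq1 pq1.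
have q1b := cov_ne_bot hq1 hp1 (contra_neq esym pq1).
have q2b := cov_ne_bot hq2 hp2 (contra_neq esym pq2).
have ncc x y : ucovers \top x -> ucovers \top y -> x != y -> ~~ (x <= y).
  by move=> hx hy; apply: contra_neqN => /(coatom_le hx hy).
have n1 : (\bot : L) != \top by rewrite (lt_eqF bt).
have n2 : (\bot : L) != c1 by rewrite eq_sym.
have n3 : (\bot : L) != c2 by rewrite eq_sym.
have n4 : (\bot : L) != p1 by rewrite eq_sym.
have n5 : (\bot : L) != q1 by rewrite eq_sym.
have n6 : (\bot : L) != q2 by rewrite eq_sym.
have n7 : (\top : L) != c1 by rewrite eq_sym (lt_eqF c1t).
have n8 : (\top : L) != c2 by rewrite eq_sym (lt_eqF c2t).
have n9 : (\top : L) != p1 by rewrite eq_sym (lt_eqF (lt_trans p1c c1t)).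
have n10 : (\top : L) != q1 by rewrite eq_sym (lt_eqF (lt_trans q1c c1t)).
have n11 : (\top : L) != q2 by rewrite eq_sym (lt_eqF (lt_trans q2c c2t)).
have n12 : c1 != c2 by [].
have n13 : c1 != p1 by rewrite eq_sym (lt_eqF p1c).
have n14 : c1 != q1 by rewrite eq_sym (lt_eqF q1c).
have n15 : c1 != q2 by apply: contraNneq (ncc _ _ h1 h2 c12) => ->; rewrite ltW.
have n16 : c2 != p1 by apply: contraNneq (ncc _ _ h2 h1 c21) => ->; rewrite ltW.
have n17 : c2 != q1 by apply: contraNneq (ncc _ _ h2 h1 c21) => ->; rewrite ltW.
have n18 : c2 != q2 by rewrite eq_sym (lt_eqF q2c).
have n19 : p1 != q1 by [].
have n20 : p1 != q2 by apply: contraNneq nq2 => <-; rewrite ltW.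
have n21 : q1 != q2 by apply: contraNneq nq2 => <-; rewrite ltW.
pose s := [:: \bot; \top; c1; c2; p1; q1; q2].
have Us : uniq s.
  by rewrite /s /= !inE !negb_or n1 n2 n3 n4 n5 n6 n7 n8 n9 n10 n11 n12 n13 n14 n15 n16 n17 n18 n19 n20 n21.
have alls z : z \in s.
  apply: contraT => zs.
  have : uniq (z :: s) by rewrite cons_uniq zs Us.
  move/card_uniqP => E; have := max_card (mem (z :: s)); rewrite E /=.
  by move=> H; move: (leq_ltn_trans H N7); rewrite ltnn.
have low : forall z, (z < q1) ==> (z == \bot).
  apply: (all7 alls).
  - by rewrite eqxx implybT.
  - by rewrite (lt_gtF (lt_trans q1c c1t)).
  - by rewrite (lt_gtF q1c).
  - apply/implyP => h; exfalso; move: (ncc _ _ h2 h1 c21).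
    by rewrite (ltW (lt_trans h q1c)).
  - by apply/implyP => h; exfalso; apply: (cov_btw hp1 h q1c).
  - by rewrite ltxx.
  - apply/implyP => h; exfalso; move: nq2; by rewrite (ltW (lt_trans h q1c)).
have up : forall z, (q1 <= z) ==> (z \in [:: q1; c1; \top]).
  apply: (all7 alls).
  - apply/implyP => h; exfalso; move: n5; by rewrite eq_le le0x h.
  - by rewrite !inE eqxx !orbT implybT.
  - by rewrite !inE eqxx !orbT implybT.
  - by rewrite (negbTE nq1).
  - apply/implyP => h; exfalso; apply: (cov_btw hq1 _ p1c).
    by rewrite lt_neqAle h eq_sym n19.
  - by rewrite !inE eqxx implybT.
  - apply/implyP => h; exfalso; move: nq1; by rewrite (le_trans h (ltW q2c)).
have jq1 : join_irr q1.
  rewrite /join_irr; have -> : [set y | ucovers q1 y] = [set \bot].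
    apply/setP => y; rewrite !inE; apply/idP/idP => [hy|/eqP ->].
      by have := low y; rewrite (cov_lt hy).
    rewrite /ucovers lt_neqAle n5 le0x /=; apply/forallP => z; apply/negP => /andP [bz zq].
    by have := low z; rewrite zq /= => /eqP E; move: bz; rewrite E ltxx.
  by rewrite cards1.
have := cex q1 jq1.
have : (#|upset q1| <= 3)%N.
  apply: leq_trans (card_size [:: q1; c1; \top]); apply: subset_leq_card.
  by apply/subsetP => z; rewrite inE => h; have := up z; rewrite h.
have : (7 <= #|L|)%N by move/card_uniqP: Us => /= <-; apply: max_card.
move=> H7 H3 H; have := leq_trans H (leq_mul (leqnn 2) H3); rewrite leqNgt.
by move/negP; apply; rewrite ltnS; apply: leq_trans _ H7.
Qed.
End Small.


Lemma ar4 n a b u s : (n < 2 * a -> a + 1 = b + u -> 2 * b <= s -> n + 2 < s + 2 * u)%N.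
Proof. lia. Qed.
Lemma ar5 s a b r : (s = a + (b + r) -> a <= 1 -> b <= 1 -> 2 < s -> 0 < r)%N.
Proof. lia. Qed.
Lemma ar6 n a b u s : (n < 2 * a -> a + 1 = b + u -> b <= 2 -> 3 < s -> n + 2 < s + 2 * u)%N.
Proof. lia. Qed.
Lemma ar7 n a b u : (n < 2 * a -> a + 1 = b + u -> b <= 2 -> u <= 2 -> 8 <= n -> False)%N.
Proof. lia. Qed.

Section Main.
Variables (d : Order.disp_t) (L : finTBLatticeType d).
Hypothesis Hmin : min_counterexample L.

Lemma get_j (A : {set L}) bot top (hS : induced_lattice A) (hbot : bot \in A) (htop : top \in A)
  (hb : forall z, z \in A -> bot <= z) (ht : forall z, z \in A -> z <= top) :
  (#|A| < #|L|)%N -> (1 < #|A|)%N ->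
  exists j, [/\ j \in A, jirr_in A j & (2 * #|up_in A j| <= #|A|)%N].
Proof.
move=> AL A1.
have nc : ~ counterexample (subL hS hbot htop hb ht).
  by move/((proj2 Hmin) _ _); rewrite card_subL leqNgt AL.
case: (boolP [exists j in A, jirr_in A j && ~~ (#|A| < 2 * #|up_in A j|)%N]).
  by case/exists_inP => j jA /andP [jj H]; exists j; split => //; rewrite leqNgt.
move/negP => H; exfalso; apply: nc; apply/cex_sub; split => // j jA jj.
apply/negPn/negP => H'; apply: H; apply/exists_inP; exists j => //; by rewrite jj H'.
Qed.

Lemma ucov_weak (A : {set L}) x y : ucovers x y -> ucov_in A x y.
Proof.
rewrite /ucovers /ucov_in => /andP [-> /forallP H] /=.
by apply/forallP => z; apply/implyP => _; exact: H.
Qed.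

Lemma main (S : {set L}) (bot top : L) :
  induced_lattice S ->
  bot \in S -> top \in S ->
  (forall z, z \in S -> bot <= z) ->
  (forall z, z \in S -> z <= top) ->
  ((3 < #|S| < 8)%N \/
   ((2 < #|S|)%N /\ (#|S| < #|L| - 2)%N /\ exists2 x : L, dual_atom x & x <= top)) ->
  (forall x, x \in S -> x != bot -> x != top -> forall y, y \notin S ->
     ~~ ucovers x y && ~~ ucovers y x) -> False.
Proof.
move=> hS hbot htop hb ht hcase iso.
have N8 := small (proj1 Hmin).
have cex := proj2 (proj1 Hmin).
have S3 : (2 < #|S|)%N by case: hcase => [/andP [h _]|[h _]] //; apply: ltn_trans h.
have SN : (#|S| < #|L|)%N.
  case: hcase => [/andP [_ h]|[_ [h _]]]; first by apply: leq_trans h N8.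
  exact: leq_trans h (leq_subr _ _).
have [j [jS jj jup]] := get_j hS hbot htop hb ht SN (ltn_trans (isT : (1 < 2)%N) S3).
have jb : j != bot by apply: contraTneq jj => ->; apply: not_jirr_bot.
case: (eqVneq j top) => [ejt|jt].
  subst j.
  move: jj; rewrite /jirr_in => /cards1P [c Hc].
  have : c \in [set y in S | ucov_in S top y] by rewrite Hc set11.
  rewrite inE => /andP [cS hc].
  have cuniq y : y \in S -> ucov_in S top y -> y = c.
    by move=> yS hy; apply/set1P; rewrite -Hc inE yS hy.
  have ct : c < top by case/andP: hc.
  have below z : z \in S -> z != top -> z <= c.
    move=> zS zt; have zlt : z < top by rewrite lt_neqAle zt ht.
    by have [w wS /andP [hw zw]] := lcover_ex htop zS zlt; rewrite -(cuniq w wS hw).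
  have [x [xS xb xt]] : exists x, [/\ x \in S, x != bot & x != top].
    have : (0 < #|(S :\ bot) :\ top|)%N.
      have E := cardsD1 bot S; rewrite (cardsD1 top (S :\ bot)) in E.
      exact: ar5 E (leq_b1 _) (leq_b1 _) S3.
    by case/card_gt0P => x; rewrite !inE => /and3P [xt xb xS]; exists x.
  have cb : c != bot.
    apply/eqP => E; move: xb; rewrite eq_le hb // andbT -E below //.
  have ctn : c != top by rewrite lt_eqF.
  have Ic : inI S bot top c by rewrite /inI cS cb ctn.
  case: (boolP (jirr_in S c)) => jc.
    have JIc : join_irr c by rewrite (F3 hb ht iso Ic).
    have upc : (#|up_in S c| <= 2)%N.
      apply: leq_trans (card_size [:: c; top]); apply: subset_leq_card.
      apply/subsetP => y; rewrite /up_in !inE => /andP [yS cy].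
      case: (eqVneq y top) => [_|yt]; first by rewrite orbT.
      case: (eqVneq y c) => [_|yc] //; exfalso.
      move: hc => /andP [_ /forallP /(_ y)]; rewrite yS /= lt_neqAle eq_sym yc cy /=.
      by rewrite lt_neqAle yt ht.
    have F := F4 htop hb ht iso Ic.
    case: (ltnP 3 #|S|) => S4.
      exact: (key hbot htop hb ht iso Hmin Ic (ar6 (cex _ JIc) F upc S4)).
    case: hcase => [/andP [h _]|[_ [_ [dd hd ddt]]]]; first by move: S4; rewrite leqNgt h.
    have U2 : (#|upset top| <= 2)%N.
      apply: leq_trans (card_size [:: dd; \top]); apply: subset_leq_card.
      apply/subsetP => y; rewrite /upset !inE => ty.
      have dy := le_trans ddt ty.
      case: (eqVneq y \top) => [_|yt]; first by rewrite orbT.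
      case: (eqVneq y dd) => [_|yd] //; exfalso.
      move: hd; rewrite /dual_atom /ucovers => /andP [_ /forallP /(_ y)].
      by rewrite lt_neqAle eq_sym yd dy /= lt_neqAle yt lex1.
    exact: (ar7 (cex _ JIc) F upc U2 N8).
  pose S0 := S :\ top.
  have inS0 y : (y \in S0) = (y != top) && (y \in S) by rewrite !inE.
  have bt : bot != top.
    apply/eqP => E; move: xb; rewrite eq_le hb // andbT E ht //.
  have b0S : bot \in S0 by rewrite inS0 bt hbot.
  have cS0 : c \in S0 by rewrite inS0 ctn cS.
  have hb0 z : z \in S0 -> bot <= z by rewrite inS0 => /andP [_ /hb].
  have ht0 z : z \in S0 -> z <= c by rewrite inS0 => /andP [zt zS]; apply: below.
  have hS0 : induced_lattice S0.
    move=> a b; rewrite !inS0 => /andP [a_t aS] /andP [bt' bS].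
    have [[jn jnS Hj] [mn mnS Hm]] := hS a b aS bS.
    split.
      exists jn.
        rewrite inS0 jnS andbT; apply: contraTneq ct => E.
        have : jn <= c by rewrite -Hj // below // below.
        rewrite E.
by move/le_gtF ->.
      by move=> z; rewrite inS0 => /andP [_ zS]; apply: Hj.
    exists mn.
      rewrite inS0 mnS andbT; apply: contraTneq ct => E.
      have : mn <= a by have := Hm mn mnS; rewrite lexx => /andP [].
      by rewrite E => ta; move: (le_trans ta (below _ aS a_t)) => /le_gtF ->.
    by move=> z; rewrite inS0 => /andP [_ zS]; apply: Hm.
  have iso0 x' : x' \in S0 -> x' != bot -> x' != c -> forall y, y \notin S0 ->
      ~~ ucovers x' y && ~~ ucovers y x'.
    move=> xS0 xb' xc y yS0; move: xS0; rewrite inS0 => /andP [xt' xS'].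
    case: (boolP (y \in S)) => yS; last exact: iso _ xS' xb' xt' _ yS.
    have ey : y = top by move: yS0; rewrite inS0 yS andbT negbK => /eqP.
    subst y; apply/andP; split.
      by apply/negP => /andP [tx _]; move: (lt_le_trans tx (ht _ xS')); rewrite ltxx.
    by apply/negP => /(ucov_weak S) /(cuniq _ xS') E; move: xc; rewrite E eqxx.
  have cardS0 : (#|S0| + 1 = #|S|)%N by rewrite (cardsD1 top S) htop addnC.
  have S0N : (#|S0| < #|L|)%N by apply: leq_trans SN; rewrite -cardS0 addn1.
  have S01 : (1 < #|S0|)%N.
    by apply/card_gt1P; exists bot, c; rewrite b0S cS0 eq_sym cb.
  have [j0 [j0S jj0 jup0]] := get_j hS0 b0S cS0 hb0 ht0 S0N S01.
  have j0b : j0 != bot by apply: contraTneq jj0 => ->; apply: not_jirr_bot.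
  have j0c : j0 != c.
    apply: contraNneq jc => E; subst j0; move: jj0; rewrite /jirr_in.
    suff -> : [set y in S0 | ucov_in S0 c y] = [set y in S | ucov_in S c y] by [].
    apply/setP => y; rewrite !inE.
    have -> : ucov_in S0 c y = ucov_in S c y.
      rewrite /ucov_in; congr (_ && _); apply/forallP/forallP => H z.
        case: (eqVneq z top) => [->|zt']; last by have := H z; rewrite inS0 zt'.
        by rewrite (lt_gtF ct) andbF implybT.
      by apply/implyP; rewrite inS0 => /andP [_ zS]; move: (H z); rewrite zS.
    case: (boolP (ucov_in S c y)) => hy; rewrite ?andbF //.
    by rewrite (lt_eqF (lt_trans (proj1 (andP hy)) ct)).
  have Ij0 : inI S0 bot c j0 by rewrite /inI j0S j0b j0c.
  have JI0 : join_irr j0 by rewrite (F3 hb0 ht0 iso0 Ij0).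
  apply: (key b0S cS0 hb0 ht0 iso0 Hmin Ij0).
  exact: ar4 (cex _ JI0) (F4 cS0 hb0 ht0 iso0 Ij0) jup0.
have Ij : inI S bot top j by rewrite /inI jS jb jt.
have JI : join_irr j by rewrite (F3 hb ht iso Ij).
apply: (key hbot htop hb ht iso Hmin Ij).
exact: ar4 (cex _ JI) (F4 htop hb ht iso Ij) jup.
Qed.
End Main.


Theorem theorem2p15 (d : Order.disp_t) (L : finTBLatticeType d)
  (S : {set L}) (bot top : L) :
  min_counterexample L ->
  induced_lattice S ->
  bot \in S -> top \in S ->
  (forall z, z \in S -> bot <= z) ->
  (forall z, z \in S -> z <= top) ->
  ((3 < #|S| < 8)%N \/
   ((2 < #|S|)%N /\ (#|S| < #|L| - 2)%N /\ exists2 x : L, dual_atom x & x <= top)) ->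
  exists x : L, [/\ x \in S, x != bot, x != top &
    exists y : L, (y \notin S) && (ucovers x y || ucovers y x)].
Proof.
move=> Hmin hS hbot htop hb ht hcase.
case: (boolP [exists x, [&& x \in S, x != bot, x != top &
    [exists y, (y \notin S) && (ucovers x y || ucovers y x)]]]).
  by case/existsP => x /and4P [xS xb xt /existsP [y Hy]]; exists x; split => //; exists y.
move=> Hneg; exfalso; apply: (main Hmin hS hbot htop hb ht hcase).
move=> x xS xb xt y yS; rewrite -negb_or; apply/negP => H.
move/negP: Hneg; apply; apply/existsP; exists x; rewrite xS xb xt /=.
by apply/existsP; exists y; rewrite yS H.
Qed.
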